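(* Consider the discrete first-price auction in the model without ties with $n\ge3$ bidders whose values are drawn independently and uniformly from $X=\{0,1,\dots,x\}$. If $$x>\frac{2^{1/(n-1)}}{2^{1/(n-1)}-1},$$ then the auction has no symmetric equilibrium.
   Context: Model. There are $n$ risk-neutral bidders competing for one indivisible object. Values and bids lie in $X=\{0,1,2,\dots,x\}$ for some $x\in\mathbb N$. Each bidder privately learns a value drawn independently and uniformly from $X$. Each bidder submits a bid in $X$. A (pure) strategy is a bidding function $\beta:X\to X$. In the model without ties, bidder $i$ wins iff $b_i>b_j$ for all $j\neq i$ (if the highest bid is tied, nobody wins). In the first-price auction, a bidder with value $v_i$ bidding $b_i$ gets expected payoff $(v_i-b_i)\Pr(i\text{ wins})$. An equilibrium is a profile of bidding functions such that each bidder's bidding function maximises their expected payoff given the others' bidding functions (a pure-strategy Bayes–Nash equilibrium) and such that no bidder uses a weakly dominated bidding function (a bidding function is weakly dominated if some other bidding function yields at least as high expected payoff against every profile of opponents' bidding functions, and strictly higher against some). A symmetric equilibrium is an equilibrium in which all bidders use the same bidding function. *)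

(* Defs.v *)
From HB Require Import structures.
From mathcomp Require Import all_boot all_order all_algebra.
From mathcomp Require Import reals exp.
Set Implicit Arguments. Unset Strict Implicit. Unset Printing Implicit Defensive.
Import Order.TTheory GRing.Theory Num.Theory.
Local Open Scope ring_scope.

(* Values and bids lie in X = {0,...,x}, represented by 'I_x.+1. *)
Definition bidfun (x : nat) := 'I_x.+1 -> 'I_x.+1.

Definition profile (n x : nat) := 'I_n -> bidfun x.

(* Model without ties: bidder i wins iff its bid is strictly higher than
   every other bidder's bid. *)
Definition wins (n x : nat) (p : profile n x) (i : 'I_n)
    (v : {ffun 'I_n -> 'I_x.+1}) : bool :=
  [forall j, (j != i) ==> (nat_of_ord (p j (v j)) < nat_of_ord (p i (v i)))%N].

(* Ex-ante expected payoff of bidder i in the first-price auction, values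
   i.i.d. uniform on X: average over all (x+1)^n value profiles of
   (v_i - b_i) * 1[i wins]. *)
Definition payoff (R : realType) (n x : nat) (p : profile n x) (i : 'I_n) : R :=
  ((x.+1 ^ n)%:R)^-1 *
  \sum_(v : {ffun 'I_n -> 'I_x.+1})
     (((nat_of_ord (v i))%:R - (nat_of_ord (p i (v i)))%:R) * (wins p i v)%:R).

Definition upd (n x : nat) (p : profile n x) (i : 'I_n) (b : bidfun x)
  : profile n x := fun j => if j == i then b else p j.

Definition is_BNE (R : realType) (n x : nat) (p : profile n x) : Prop :=
  forall (i : 'I_n) (b : bidfun x), payoff R (upd p i b) i <= payoff R p i.

Definition weakly_dominated (R : realType) (n x : nat) (i : 'I_n) (b : bidfun x)
  : Prop :=
  exists b' : bidfun x,
    (forall q : profile n x, payoff R (upd q i b) i <= payoff R (upd q i b') i) /\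
    (exists q : profile n x, payoff R (upd q i b) i < payoff R (upd q i b') i).

Definition equilibrium (R : realType) (n x : nat) (p : profile n x) : Prop :=
  is_BNE R p /\ forall i : 'I_n, ~ weakly_dominated R i (p i).

Definition symmetric_equilibrium (R : realType) (n x : nat) (b : bidfun x) : Prop :=
  equilibrium R (fun _ : 'I_n => b).

(* Main.v *)
Require Import Defs.
From HB Require Import structures.
From mathcomp Require Import all_boot all_order all_algebra.
From mathcomp Require Import reals exp.
From mathcomp Require Import zify ring lra.
Import Order.TTheory GRing.Theory Num.Theory.
Definition cnt {x : nat} (f : bidfun x) (bt : nat) : nat :=
  (\sum_(s : 'I_x.+1) (f s < bt)%N)%N.

Lemma expn_mono a b e : (a <= b)%N -> (a ^ e <= b ^ e)%N.
Proof. by move=> ab; elim: e => // e IH; rewrite !expnS leq_mul. Qed.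

Lemma powk_lt a b k : (2 <= k)%N -> (2 * a ^ 2 < b ^ 2)%N -> (a <= b)%N ->
  (2 * a ^ k < b ^ k)%N.
Proof.
move=> k2 h ab; have [k' ->] : exists k', k = (k' + 2)%N by exists (k - 2)%N; lia.
rewrite !expnD; have := expn_mono _ _ k' ab.
have : (0 < b ^ k')%N by rewrite expn_gt0; apply/orP; left; nia.
move: (a ^ k')%N (b ^ k')%N => A B; nia.
Qed.

Lemma powk_le a b k : (2 <= k)%N -> (2 * a ^ 2 <= b ^ 2)%N -> (a <= b)%N ->
  (2 * a ^ k <= b ^ k)%N.
Proof.
move=> k2 h ab; have [k' ->] : exists k', k = (k' + 2)%N by exists (k - 2)%N; lia.
rewrite !expnD; have := expn_mono _ _ k' ab.
move: (a ^ k')%N (b ^ k')%N => A B; nia.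
Qed.

Lemma sum_lt N m : (\sum_(s < N) (s < m)%N)%N = minn m N.
Proof.
elim: N => [|N IH]; first by rewrite big_ord0; lia.
rewrite big_ord_recr /= IH; case: (ltnP N m) => h; lia.
Qed.

Lemma cnt_lb x (b : bidfun x) bt m : (m <= x.+1)%N ->
  (forall s : 'I_x.+1, (s < m)%N -> (b s < bt)%N) -> (m <= cnt b bt)%N.
Proof.
move=> mx H; apply: leq_trans (_ : (\sum_(s < x.+1) (s < m)%N)%N <= _)%N.
  by rewrite sum_lt; lia.
by apply: leq_sum => s _; case: ltnP => // /H ->.
Qed.

Lemma cnt_ub x (b : bidfun x) bt m :
  (forall s : 'I_x.+1, (b s < bt)%N -> (s < m)%N) -> (cnt b bt <= m)%N.
Proof.
move=> H; apply: leq_trans (_ : (\sum_(s < x.+1) (s < m)%N)%N <= _)%N.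
  by apply: leq_sum => s _; case: ltnP => // /H ->.
by rewrite sum_lt; lia.
Qed.

Lemma cnt0 x (b : bidfun x) : cnt b 0 = 0%N.
Proof. by rewrite /cnt big1. Qed.

Definition BRprop {x} k (b : bidfun x) := forall v bt : 'I_x.+1, (bt <= v)%N ->
  ((v - bt) * cnt b bt ^ k <= (v - b v) * cnt b (b v) ^ k)%N.

Lemma mono x k (b : bidfun x) : (forall v : 'I_x.+1, (b v <= v)%N) -> BRprop k b ->
  forall u w : 'I_x.+1, (u < w)%N -> (0 < cnt b (b u))%N -> (b u <= b w)%N.
Proof.
move=> F2 BR u w uw c0; rewrite leqNgt; apply/negP => lt.
have Fu := F2 u.
have H1 := BR u (b w) (ltnW (leq_trans lt Fu)).
have H2 := BR w (b u) (ltnW (leq_ltn_trans Fu uw)).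
have : (0 < cnt b (b u) ^ k)%N by rewrite expn_gt0 c0.
move: H1 H2; move: (cnt b (b u) ^ k)%N (cnt b (b w) ^ k)%N => Cu Cw.
move: lt Fu uw; move: (nat_of_ord (b u)) (nat_of_ord (b w)) (nat_of_ord u) (nat_of_ord w).
move=> bu bw uu ww lt Fu uw H1 H2 Cu0.
have [a Ha] : exists a, uu = (bu + a)%N by exists (uu - bu)%N; lia.
subst uu.
have [c Hc] : exists c, bu = (bw + 1 + c)%N by exists (bu - bw - 1)%N; lia.
subst bu.
have [e He] : exists e, ww = (bw + 1 + c + a + 1 + e)%N by exists (ww - (bw + 1 + c + a + 1))%N; lia.
subst ww.
move: H1 H2; rewrite ?addnA.
have -> : (bw + 1 + c + a - bw = 1 + c + a)%N by lia.
have -> : (bw + 1 + c + a - (bw + 1 + c) = a)%N by lia.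
have -> : (bw + 1 + c + a + 1 + e - (bw + 1 + c) = a + 1 + e)%N by lia.
have -> : (bw + 1 + c + a + 1 + e - bw = 1 + c + a + 1 + e)%N by lia.
move=> H1 H2.
have hC : (Cu <= Cw)%N by nia.
nia.
Qed.

Lemma main_ind x k (b : bidfun x) : (2 <= k)%N ->
  (forall v : 'I_x.+1, (b v <= v)%N) ->
  (forall v : 'I_x.+1, (2 <= v)%N -> (b v < v)%N) -> BRprop k b ->
  forall v, (2 <= v <= x)%N -> (b (inord v) : nat) = v.-1.
Proof.
move=> k2 F2 F3 BR.
pose B (v : nat) : nat := b (inord v).
have Bs : forall s : 'I_x.+1, (b s : nat) = B s by move=> s; rewrite /B inord_val.
have BRn : forall v bt : nat, (v <= x)%N -> (bt <= v)%N ->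
    ((v - bt) * cnt b bt ^ k <= (v - B v) * cnt b (B v) ^ k)%N.
  move=> v bt vx btv; have := BR (inord v) (inord bt).
  rewrite !inordK; try lia; by apply; lia.
have F2n : forall v, (v <= x)%N -> (B v <= v)%N.
  by move=> v vx; have := F2 (inord v); rewrite inordK.
have F3n : forall v, (2 <= v <= x)%N -> (B v < v)%N.
  by move=> v /andP [v2 vx]; have := F3 (inord v); rewrite inordK //; apply.
have c1 : forall bt, (0 < bt)%N -> (0 < cnt b bt)%N.
  move=> bt bt0; apply: cnt_lb => // s s1; have := F2 s; lia.
have k0 : (0 < k)%N by lia.
elim/ltn_ind => v IH /andP [v2 vx].
rewrite -/(B v).
have hb : (B v < v)%N by apply: F3n; lia.
have monoN : forall u w, (u < w)%N -> (w <= x)%N -> (0 < cnt b (B u))%N -> (B u <= B w)%N.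
  move=> u w uw wx cu; have := @mono x k b F2 BR (inord u) (inord w).
  rewrite !inordK; try lia; by apply.
case: (eqVneq (B v) v.-1) => // hne.
have [v2e | v3] : v = 2 \/ (3 <= v)%N by lia.
  subst v; have B20 : B 2 = 0 by lia.
  have := BRn 2 1 vx isT; rewrite B20 cnt0 exp0n //.
  have hc : (0 < cnt b 1 ^ k)%N by rewrite expn_gt0 c1.
  lia.
have Bv1 : B (v - 1) = (v - 2)%N by rewrite /B IH; lia.
have cpos : (0 < cnt b (B (v - 1)))%N by rewrite Bv1; apply: c1; lia.
have mono_v : forall w, (v - 1 < w)%N -> (w <= x)%N -> (v - 2 <= B w)%N.
  by move=> w h1 h2; rewrite -Bv1; apply: monoN.
case: (ltnP (B v) (v - 2)) => hlow.
  by have := mono_v v; lia.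
have Bv : B v = (v - 2)%N by lia.
have c2ub : (cnt b (v - 2) <= v - 1)%N.
  apply: cnt_ub => s; rewrite Bs => h; rewrite ltnNge; apply/negP => hs.
  have : (v - 2 <= B s)%N.
    case: (eqVneq (s : nat) (v - 1)%N) => e; first by rewrite e Bv1.
    apply: mono_v; first lia. by have := ltn_ord s; lia.
  lia.
have c1lb : (v + 1 <= cnt b (v - 1))%N.
  apply: cnt_lb; first lia.
  move=> s hs; rewrite Bs.
  have sx : (s <= x)%N by have := ltn_ord s; lia.
  case: (ltnP s 2) => hs2; first by have := F2n s sx; lia.
  case: (ltnP s v) => hsv; last by (have -> : (s : nat) = v by lia); lia.
  by rewrite /B (IH s) //; lia.
have H := BRn v (v - 1)%N vx (leq_subr _ _).
have ee1 : (v - (v - 1) = 1)%N by lia.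
have ee2 : (v - (v - 2) = 2)%N by lia.
rewrite Bv ee1 ee2 mul1n in H.
have e1 := expn_mono _ _ k c1lb.
have e2 := expn_mono _ _ k c2ub.
exfalso.
have [v4 | v5] : (v <= 4)%N \/ (5 <= v)%N by lia.
  have : (2 * (v - 1) ^ k < (v + 1) ^ k)%N.
    apply: powk_lt => //; last lia.
    by have [->|->] : v = 3 \/ v = 4 by lia.
  move: H e1 e2; move: ((v + 1) ^ k)%N ((v - 1) ^ k)%N (cnt b (v - 1) ^ k)%N (cnt b (v - 2) ^ k)%N => A C X1 X2.
  lia.
have c3lb : (v - 2 <= cnt b (v - 3))%N.
  apply: cnt_lb; first lia.
  move=> s hs; rewrite Bs.
  have sx : (s <= x)%N by have := ltn_ord s; lia.
  case: (ltnP s 2) => hs2; first by have := F2n s sx; lia.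
  by rewrite /B (IH s) //; lia.
have H' := BRn (v - 1) (v - 3)%N (leq_trans (leq_subr _ _) vx) (leq_sub2l _ (isT : (1 <= 3)%N)).
have ee3 : (v - 1 - (v - 3) = 2)%N by lia.
have ee4 : (v - 1 - (v - 2) = 1)%N by lia.
rewrite Bv1 ee3 ee4 mul1n in H'.
have e3 := expn_mono _ _ k c3lb.
have : ((v + 1) ^ k * (v - 2) ^ k <= (v - 1) ^ k * (v - 1) ^ k)%N.
  move: e1 e2 e3 H H'.
  move: ((v + 1) ^ k)%N ((v - 2) ^ k)%N ((v - 1) ^ k)%N (cnt b (v - 1) ^ k)%N
     (cnt b (v - 2) ^ k)%N (cnt b (v - 3) ^ k)%N => A D C X1 X2 X3.
  move=> e1 e2 e3 H H'.
  have h1 : (A <= 2 * C)%N by clear -e1 e2 H; lia.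
  have h2 : (2 * D <= C)%N by clear -e2 e3 H'; lia.
  have := leq_mul h1 h2; clear -h1 h2; nia.
rewrite -!expnMn leq_exp2r //.
move=> h; clear -h v5.
have [w ew] : exists w, v = (w + 5)%N by exists (v - 5)%N; lia.
subst v.
have e1 : (w + 5 + 1 = w + 6)%N by lia.
have e2 : (w + 5 - 2 = w + 3)%N by lia.
have e3 : (w + 5 - 1 = w + 4)%N by lia.
rewrite e1 e2 e3 in h.
move: h; rewrite !mulnDr !mulnDl; lia.
Qed.

Local Open Scope ring_scope.

Lemma cond_nat (R : realType) (n x : nat) : (3 <= n)%N ->
  (2 `^ (((n - 1)%N)%:R^-1) / (2 `^ (((n - 1)%N)%:R^-1) - 1) < (x%:R : R))%R ->
  (x ^ (n - 1) < 2 * (x - 1) ^ (n - 1))%N.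
Proof.
move=> n3; set k := (n - 1)%N; set c : R := 2 `^ _ => H.
have k0 : (0 < k)%N by rewrite /k; lia.
have c0 : (0 <= c)%R by apply: powR_ge0.
have ck : (c ^+ k = 2)%R.
  rewrite -powR_mulrn // /c -powRrM mulVf ?powRr1 //.
  by rewrite pnatr_eq0 -lt0n.
have c1 : (1 < c)%R.
  rewrite ltNge; apply/negP => cle.
  have : (c ^+ k <= 1)%R by apply: exprn_ile1.
  by rewrite ck; lra.
move: H; rewrite ltr_pdivrMr ?subr_gt0 // => H.
have x1 : (1 <= x)%N.
  rewrite lt0n; apply/negP => /eqP x0; move: H; rewrite x0 mul0r; lra.
have H2 : ((x%:R : R) < c * (x - 1)%:R)%R by rewrite natrB //; nra.
have : ((x%:R : R) ^+ k < (c * (x - 1)%:R) ^+ k)%R.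
  by rewrite ltrXn2r // -?lt0n //.
by rewrite exprMn ck -!natrX -natrM ltr_nat.
Qed.
Lemma winsE (R : realType) n x (p : profile n x) i v :
  ((wins p i v)%:R : R) =
  \prod_(j | j != i) (((p j (v j) < p i (v i))%N)%:R : R).
Proof.
rewrite /wins; case: forallP => H /=.
  by rewrite big1 // => j ji; move: (H j); rewrite ji /= => ->.
have [j] : exists j, ~~ ((j != i) ==> (p j (v j) < p i (v i))%N).
  by apply/existsP; rewrite -negb_forall; apply/forallP.
rewrite negb_imply => /andP [ji /negbTE hj].
by rewrite (bigD1 j) //= hj mul0r.
Qed.

Lemma payoffE (R : realType) n x (p : profile n x) i :
  payoff R p i = ((x.+1 ^ n)%:R)^-1 *
    \sum_(t : 'I_x.+1) (((t : nat)%:R - (p i t : nat)%:R) *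
        \prod_(j | j != i) ((cnt (p j) (p i t))%:R : R)).
Proof.
rewrite /payoff; congr (_ * _).
under eq_bigr => v _ do rewrite winsE.
pose F (v : {ffun 'I_n -> 'I_x.+1}) : R := ((v i : nat)%:R - (p i (v i) : nat)%:R) *
     \prod_(j | j != i) (((p j (v j) < p i (v i))%N)%:R : R).
rewrite -/(\sum_(v : {ffun 'I_n -> 'I_x.+1}) F v).
have -> : \sum_(v : {ffun 'I_n -> 'I_x.+1}) F v = \sum_(v : {ffun 'I_n -> 'I_x.+1}) \sum_(t : 'I_x.+1) ((v i == t)%:R * F v).
  apply: eq_bigr => v _; rewrite (bigD1 (v i)) //= eqxx mul1r big1 ?addr0 //.
  by move=> t /negbTE; rewrite eq_sym => ->; rewrite mul0r.
rewrite exchange_big /=; apply: eq_bigr => t _.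
pose h (j : 'I_n) (s : 'I_x.+1) : R := if j == i then (s == t)%:R * ((t : nat)%:R - (p i t : nat)%:R)
   else ((p j s < p i t)%N)%:R.
have -> : \sum_(v : {ffun 'I_n -> 'I_x.+1}) (v i == t)%:R * F v = \sum_(v : {ffun 'I_n -> 'I_x.+1}) \prod_j h j (v j).
  apply: eq_bigr => v _; rewrite (bigD1 i) //= /h eqxx /F.
  case: (eqVneq (v i) t) => [<-|vt]; last by rewrite !mul0r.
  rewrite !mul1r; congr (_ * _); apply: eq_bigr => j /negbTE -> //.
rewrite -bigA_distr_bigA /= (bigD1 i) //= /h eqxx; congr (_ * _).
  rewrite -big_distrl /= (bigD1 t) //= eqxx big1 ?addr0 ?mul1r //.
  by move=> s /negbTE ->.
apply: eq_bigr => j /negbTE ->; rewrite /cnt natr_sum //.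
Qed.


Lemma prodc (R : realType) n (i : 'I_n) (c : nat) :
  \prod_(j | j != i) (c%:R : R) = (c ^ n.-1)%:R.
Proof. by rewrite prodr_const cardC1 card_ord natrX. Qed.

Lemma payoff_upd (R : realType) n x (q : profile n x) i (b' : bidfun x) :
  payoff R (upd q i b') i = ((x.+1 ^ n)%:R)^-1 *
    \sum_(t : 'I_x.+1) (((t : nat)%:R - (b' t : nat)%:R) *
        \prod_(j | j != i) ((cnt (q j) (b' t))%:R : R)).
Proof.
rewrite payoffE /upd eqxx; congr (_ * _); apply: eq_bigr => t _; congr (_ * _).
by apply: eq_bigr => j /negbTE ->.
Qed.

Lemma payoff_upd_sym (R : realType) n x (b b' : bidfun x) i :
  payoff R (upd (fun _ : 'I_n => b) i b') i = ((x.+1 ^ n)%:R)^-1 *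
    \sum_(t : 'I_x.+1) (((t : nat)%:R - (b' t : nat)%:R) * ((cnt b (b' t)) ^ n.-1)%:R).
Proof.
rewrite payoff_upd; congr (_ * _); apply: eq_bigr => t _; by rewrite prodc.
Qed.

Lemma payoff_sym (R : realType) n x (b : bidfun x) i :
  payoff R (fun _ : 'I_n => b) i = ((x.+1 ^ n)%:R)^-1 *
    \sum_(t : 'I_x.+1) (((t : nat)%:R - (b t : nat)%:R) * ((cnt b (b t)) ^ n.-1)%:R).
Proof.
rewrite payoffE; congr (_ * _); apply: eq_bigr => t _; by rewrite prodc.
Qed.

Lemma sum_single (R : realType) N (f g : 'I_N -> R) v :
  (forall t, t != v -> f t = g t) ->
  ((\sum_t f t <= \sum_t g t) = (f v <= g v)) /\
  ((\sum_t f t < \sum_t g t) = (f v < g v)).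
Proof.
move=> H; rewrite (bigD1 v) //= [X in _ <= X](bigD1 v) //= [X in _ < X](bigD1 v) //=.
rewrite (eq_bigr g) => [|t /= ht]; last exact: H ht.
by rewrite lerD2r ltrD2r.
Qed.

Lemma Kpos (R : realType) n x : 0 < ((x.+1 ^ n)%:R : R)^-1.
Proof. by rewrite invr_gt0 ltr0n expn_gt0. Qed.

Lemma BR_of_BNE (R : realType) n x (b : bidfun x) : (0 < n)%N ->
  is_BNE R (fun _ : 'I_n => b) -> (forall v : 'I_x.+1, (b v <= v)%N) ->
  BRprop n.-1 b.
Proof.
move=> n0 BNE F2 v bt btv.
pose b' : bidfun x := fun t => if t == v then bt else b t.
have := BNE (Ordinal n0) b'.
rewrite payoff_upd_sym payoff_sym ler_pM2l ?Kpos //.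
pose f' := (fun t : 'I_x.+1 => ((t : nat)%:R - (b' t : nat)%:R) * (((cnt b (b' t)) ^ n.-1)%:R : R)).
pose f := (fun t : 'I_x.+1 => ((t : nat)%:R - (b t : nat)%:R) * (((cnt b (b t)) ^ n.-1)%:R : R)).
have hrest : forall t, t != v -> f' t = f t.
  by move=> t /negbTE tv; rewrite /f' /f /b' tv.
have [S1 _] := @sum_single R x.+1 f' f v hrest.
rewrite -/(\sum_t f' t) -/(\sum_t f t) S1 /f' /f /b' eqxx.
by rewrite -!natrB // -!natrM ler_nat.
Qed.

Lemma W0pos (R : realType) n x (i : 'I_n) (bt : nat) : (0 < bt)%N ->
  0 < \prod_(j | j != i) ((cnt (((fun _ _ => ord0) : profile n x) j) bt)%:R : R).
Proof.
move=> bt0; apply: prodr_gt0 => j _; rewrite ltr0n.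
by apply: (@cnt_lb x _ bt 1%N).
Qed.

Lemma undom (R : realType) n x (b : bidfun x) (i : 'I_n) (v : 'I_x.+1) :
  ((v < b v)%N \/ ((2 <= v)%N /\ (b v : nat) = v)) -> weakly_dominated R i b.
Proof.
move=> hv.
have hbv : (v <= b v)%N by case: hv => [/ltnW|[_ ->]].
have vx : (v.-1 < x.+1)%N by have := ltn_ord v; lia.
pose b' : bidfun x := fun t => if t == v then inord v.-1 else b t.
have b'v : (b' v : nat) = v.-1 by rewrite /b' eqxx inordK.
exists b'.
have key : forall q : profile n x,
   let W := fun bt : nat => \prod_(j | j != i) ((cnt (q j) bt)%:R : R) in
   let f := fun t : 'I_x.+1 => ((t : nat)%:R - (b t : nat)%:R) * W (b t) in
   let f' := fun t : 'I_x.+1 => ((t : nat)%:R - (b' t : nat)%:R) * W (b' t) in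
   (payoff R (upd q i b) i <= payoff R (upd q i b') i) = (f v <= f' v) /\
   (payoff R (upd q i b) i < payoff R (upd q i b') i) = (f v < f' v).
  move=> q W f f'.
  have hrest : forall t, t != v -> f t = f' t.
    by move=> t /negbTE tv; rewrite /f' /f /b' tv.
  have [S1 S2] := @sum_single R x.+1 f f' v hrest.
  by rewrite !payoff_upd ler_pM2l ?ltr_pM2l ?Kpos // S1 S2.
have Wge0 : forall (q : profile n x) bt, 0 <= \prod_(j | j != i) ((cnt (q j) bt)%:R : R).
  by move=> q bt; apply: prodr_ge0 => j _; apply: ler0n.
have hl : ((v : nat)%:R - (b v : nat)%:R : R) <= 0 by rewrite subr_le0 ler_nat.
have hr : 0 <= ((v : nat)%:R - (b' v : nat)%:R : R) by rewrite b'v subr_ge0 ler_nat leq_pred.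
split.
  move=> q; have [-> _] := key q; rewrite /=.
  apply: (@le_trans _ _ 0); first by apply: mulr_le0_ge0.
  by apply: mulr_ge0.
exists (fun _ _ => ord0); have [_ ->] := key (fun _ _ => ord0); rewrite /=.
case: hv => [hlt | [v2 hbe]].
  have w1 := @W0pos R n x i (b v) (leq_ltn_trans (leq0n v) hlt).
  have hl' : ((v : nat)%:R - (b v : nat)%:R : R) < 0 by rewrite subr_lt0 ltr_nat.
  have w2 := Wge0 (fun _ _ => ord0) (b' v).
  move: w1 w2 hl' hr; set A := \prod_(j | _) _; set B := \prod_(j | _) _.
  move=> w1 w2 hl' hr; nra.
have w1 : 0 < \prod_(j | j != i) ((cnt (((fun _ _ => ord0) : profile n x) j) (b' v))%:R : R).
  by apply: W0pos; rewrite b'v; lia.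
rewrite hbe subrr mul0r; apply: mulr_gt0 => //.
by rewrite b'v subr_gt0 ltr_nat; lia.
Qed.

Theorem proposition3 (R : realType) (n x : nat) :
  (3 <= n)%N ->
  (2 `^ (((n - 1)%N)%:R^-1) / (2 `^ (((n - 1)%N)%:R^-1) - 1) < (x%:R : R)) ->
  forall b : bidfun x, ~ symmetric_equilibrium R n b.
Proof.
move=> n3 Hc b; rewrite /symmetric_equilibrium /equilibrium => -[BNE ND].
have n0 : (0 < n)%N by lia.
pose i0 : 'I_n := Ordinal n0.
have F2 : forall v : 'I_x.+1, (b v <= v)%N.
  move=> v; rewrite leqNgt; apply/negP => h; apply: (ND i0).
  by apply: (@undom R n x b i0 v); left.
have F3 : forall v : 'I_x.+1, (2 <= v)%N -> (b v < v)%N.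
  move=> v v2; rewrite ltn_neqAle F2 andbT; apply/negP => /eqP h.
  by apply: (ND i0); apply: (@undom R n x b i0 v); right.
have BR := @BR_of_BNE R n x b n0 BNE F2.
have k2 : (2 <= n.-1)%N by lia.
have hc := @cond_nat R n x n3 Hc; rewrite subn1 in hc.
set k := n.-1 in BR k2 hc.
have x4 : (4 <= x)%N.
  rewrite leqNgt; apply/negP => x3.
  have : (2 * (x - 1) ^ k <= x ^ k)%N.
    apply: powk_le => //; last lia.
    by have [->|[->|[->|->]]] : x = 0%N \/ x = 1%N \/ x = 2%N \/ x = 3%N by lia.
  lia.
have MI := @main_ind x k b k2 F2 F3 BR.
have Bx : (b (inord x) : nat) = x.-1 by apply: MI; lia.
have bx : forall s : 'I_x.+1, (s : nat) = x -> (b s : nat) = x.-1.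
  move=> s hs; rewrite -Bx; have -> : s = inord x by apply: val_inj; rewrite /= inordK ?hs.
  by [].
have Bs : forall s : 'I_x.+1, (2 <= s)%N -> (b s : nat) = (s : nat).-1.
  by move=> s hs; have := MI s; rewrite inord_val; apply; have := ltn_ord s; lia.
have c2lb : (x - 1 <= cnt b (x - 2))%N.
  apply: cnt_lb; first lia.
  move=> s hs; case: (ltnP s 2) => hs2; first by have := F2 s; lia.
  by rewrite Bs //; lia.
have c1ub : (cnt b (x - 1) <= x)%N.
  apply: cnt_ub => s h; rewrite ltnNge; apply/negP => hs.
  have e : (s : nat) = x by have := ltn_ord s; lia.
  by move: h; rewrite bx //; lia.
have H := BR (inord x) (inord (x - 2)).
rewrite !inordK ?Bx in H; try lia.
have ee1 : (x - (x - 2) = 2)%N by lia.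
have ee2 : (x - x.-1 = 1)%N by lia.
have ee3 : (x.-1 = x - 1)%N by lia.
rewrite ee1 ee2 ee3 mul1n in H.
have H' := H (leq_subr _ _).
have e1 := expn_mono _ _ k c2lb.
have e2 := expn_mono _ _ k c1ub.
move: hc H' e1 e2; move: (x ^ k)%N ((x - 1) ^ k)%N (cnt b (x - 2) ^ k)%N (cnt b (x - 1) ^ k)%N.
move=> A C X1 X2; lia.
Qed.
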